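(* Let $\mathcal{S}=\{s_1,\dots,s_N\}$ be a finite state space, $\mathcal{A}$ a finite action space, $\gamma\in(0,1)$, and consider the real MDP $\langle\mathcal{S},\mathcal{A},\mathbb{P},R,\gamma\rangle$ and the DT MDP $\langle\mathcal{S},\mathcal{A},\mathbb{P}',R',\gamma\rangle$. Then $$\max_i\bar d(s_i,s_i)\le\frac{1}{1-\gamma}\max_i d_{\mathrm{TV}}(s_i,s_i).$$
   Context: $\mathbb{P}(\cdot|s,a),\mathbb{P}'(\cdot|s,a)$ are probability distributions on $\mathcal{S}$; $R,R':\mathcal{S}\times\mathcal{A}\to\mathbb{R}$; $R_{\max}=\max_{i,j,a}|R(s_i,a)-R'(s_j,a)|$. For distributions $P,Q$ on $\mathcal{S}$ and a cost $d:\mathcal{S}\times\mathcal{S}\to[0,\infty)$ (not required to vanish on the diagonal; first argument a real-MDP state, second a DT-MDP state), $W_1(P,Q;d)=\min_\Lambda\sum_{i,j}\lambda_{i,j}d(s_i,s_j)$ over nonnegative $N\times N$ matrices with row sums $P(s_i)$ and column sums $Q(s_j)$. Define $d_0\equiv0$, $d_n(s_i,s_j)=\max_a\{|R(s_i,a)-R'(s_j,a)|+\gamma W_1(\mathbb{P}(\cdot|s_i,a),\mathbb{P}'(\cdot|s_j,a);d_{n-1})\}$; the DT bisimulation metric $\bar d$ is the pointwise limit of the nondecreasing sequence $(d_n)$; it takes values in $[0,\frac{R_{\max}}{1-\gamma}]$ and satisfies $\bar d(s_i,s_j)=\max_a\{|R(s_i,a)-R'(s_j,a)|+\gamma W_1(\mathbb{P}(\cdot|s_i,a),\mathbb{P}'(\cdot|s_j,a);\bar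 d)\}$. With $\mathrm{TV}(P,Q)=\frac12\sum_i|P(s_i)-Q(s_i)|$, define $d_{\mathrm{TV}}(s_i,s_i)=\max_a\{|R(s_i,a)-R'(s_i,a)|+\frac{\gamma R_{\max}}{1-\gamma}\mathrm{TV}(\mathbb{P}(\cdot|s_i,a),\mathbb{P}'(\cdot|s_i,a))\}$. *)

(* Defs.v *)
From HB Require Import structures.
From mathcomp Require Import all_boot all_order all_algebra.
From mathcomp Require Import all_classical all_reals all_analysis.
Set Implicit Arguments. Unset Strict Implicit. Unset Printing Implicit Defensive.
Import Order.TTheory GRing.Theory Num.Theory numFieldNormedType.Exports.
Local Open Scope ring_scope.
Local Open Scope classical_set_scope.

Section DT.
Variables (R : realType) (S A : finType).

Definition is_distr (p : S -> R) : Prop :=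
  (forall s, 0 <= p s) /\ \sum_(s : S) p s = 1.

Definition coupling (P Q : S -> R) (L : S -> S -> R) : Prop :=
  [/\ forall i j, 0 <= L i j,
      forall i, \sum_(j : S) L i j = P i
    & forall j, \sum_(i : S) L i j = Q j].

(* W_1(P,Q;d) = min over couplings of sum_{i,j} L i j * d i j
   (the minimum is attained, so it equals this infimum) *)
Definition W1 (P Q : S -> R) (d : S -> S -> R) : R :=
  inf [set c | exists L, coupling P Q L /\
                 c = \sum_(i : S) \sum_(j : S) L i j * d i j].

Variables (Pr Pr' : S -> A -> S -> R) (Rw Rw' : S -> A -> R) (gamma : R).

Definition Rmax : R :=
  \big[Num.max/0]_(i : S) \big[Num.max/0]_(j : S) \big[Num.max/0]_(a : A)
     `|Rw i a - Rw' j a|.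

Fixpoint dn (n : nat) : S -> S -> R :=
  match n with
  | 0%N => fun _ _ => 0
  | n'.+1 => fun s t => \big[Num.max/0]_(a : A)
        (`|Rw s a - Rw' t a| + gamma * W1 (Pr s a) (Pr' t a) (dn n'))
  end.

Definition dbar (s t : S) : R := limn (fun n : nat => dn n s t).

Definition TV (P Q : S -> R) : R := 2^-1 * \sum_(i : S) `|P i - Q i|.

Definition dTV (s : S) : R :=
  \big[Num.max/0]_(a : A)
    (`|Rw s a - Rw' s a| + gamma * Rmax / (1 - gamma) * TV (Pr s a) (Pr' s a)).

End DT.

(* Main.v *)
Require Import Defs.
From HB Require Import structures.
From mathcomp Require Import all_boot all_order all_algebra.
From mathcomp Require Import all_classical all_reals all_analysis.
From mathcomp Require Import ring lra.
Set Implicit Arguments. Unset Strict Implicit.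
Import Order.TTheory GRing.Theory Num.Theory.
Local Open Scope ring_scope.

Section Coup.
Variables (R : realType) (S : finType).
Implicit Types (P Q : S -> R) (d : S -> S -> R).

Definition mm P Q i := Num.min (P i) (Q i).
Definition tau P Q := \sum_k (P k - mm P Q k).
Definition DC P Q i j :=
  (i == j)%:R * mm P Q i + (P i - mm P Q i) * (Q j - mm P Q j) / tau P Q.

Lemma mm_ge0 P Q i : 0 <= P i -> 0 <= Q i -> 0 <= mm P Q i.
Proof. by move=> h1 h2; rewrite /mm le_min h1 h2. Qed.
Lemma mm_leP P Q i : mm P Q i <= P i.
Proof. by rewrite /mm ge_min lexx. Qed.
Lemma mm_leQ P Q i : mm P Q i <= Q i.
Proof. by rewrite /mm ge_min lexx orbT. Qed.

Lemma sum_delta (i : S) (x : R) : \sum_j (i == j)%:R * x = x.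
Proof.
rewrite (bigD1 i) //= eqxx mul1r big1 ?addr0 // => j; rewrite eq_sym => /negbTE ->; by rewrite mul0r.
Qed.
Lemma sum_delta' (j : S) (f : S -> R) : \sum_i (i == j)%:R * f i = f j.
Proof.
rewrite (bigD1 j) //= eqxx mul1r big1 ?addr0 // => i /negbTE ->; by rewrite mul0r.
Qed.

Lemma tau_Q P Q : is_distr P -> is_distr Q -> \sum_k (Q k - mm P Q k) = tau P Q.
Proof.
move=> [_ hP] [_ hQ]; rewrite /tau !sumrB hP hQ //.
Qed.

Lemma tau_ge0 P Q : 0 <= tau P Q.
Proof. by apply: sumr_ge0 => k _; rewrite subr_ge0 mm_leP. Qed.

Lemma cancel_tau P Q (x : S -> R) : (forall k, 0 <= x k) -> \sum_k x k = tau P Q ->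
  forall i, x i * (tau P Q / tau P Q) = x i.
Proof.
move=> h0 hs i; have [t0|tn0] := eqVneq (tau P Q) 0.
  have := @psumr_eq0P R S xpredT x (fun k _ => h0 k); rewrite hs t0 => /(_ erefl i).
  by move=> -> //; rewrite mul0r.
by rewrite divff // mulr1.
Qed.

Lemma coupling_DC P Q : is_distr P -> is_distr Q -> coupling P Q (DC P Q).
Proof.
move=> hP hQ; have [hP0 _] := hP; have [hQ0 _] := hQ.
split.
- move=> i j; apply: addr_ge0.
    by apply: mulr_ge0; [rewrite ler0n | apply: mm_ge0].
  apply: divr_ge0; last exact: tau_ge0.
  by apply: mulr_ge0; rewrite subr_ge0 ?mm_leP ?mm_leQ.
- move=> i; rewrite big_split /= sum_delta.
  under eq_bigr => j _ do rewrite -mulrA.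
  rewrite -mulr_sumr -mulr_suml tau_Q // (@cancel_tau P Q (fun k => P k - mm P Q k)) //.
  + by rewrite addrC subrK.
  + by move=> k; rewrite subr_ge0 mm_leP.
- move=> j; rewrite big_split /= sum_delta'.
  under eq_bigr => i _ do rewrite mulrAC.
  rewrite -mulr_suml -mulr_suml -/(tau P Q) [X in _ + X]mulrC.
  rewrite (@cancel_tau P Q (fun k => Q k - mm P Q k)) //.
  + by rewrite addrC subrK.
  + by move=> k; rewrite subr_ge0 mm_leQ.
  + exact: tau_Q.
Qed.

Lemma tau_TV P Q : is_distr P -> is_distr Q -> tau P Q = TV P Q.
Proof.
move=> [_ hP] [_ hQ].
have e : forall k, P k - mm P Q k = 2^-1 * ((P k - Q k) + `|P k - Q k|).
  move=> k; rewrite /mm; case: (leP (P k) (Q k)) => h.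
  - rewrite ler0_norm ?subr_le0 //; lra.
  - rewrite gtr0_norm ?subr_gt0 //; lra.
rewrite /tau /TV (eq_bigr _ (fun k _ => e k)) -mulr_sumr big_split /= sumrB hP hQ subrr add0r //.
Qed.

Lemma sum2_mul (a b : S -> R) c :
  \sum_i \sum_j a i * b j * c = (\sum_i a i) * (\sum_j b j) * c.
Proof. by rewrite big_distrlr mulr_suml; apply: eq_bigr => i _; rewrite mulr_suml. Qed.

Lemma cost_ge0 P Q L d : coupling P Q L -> (forall i j, 0 <= d i j) ->
  0 <= \sum_i \sum_j L i j * d i j.
Proof.
move=> [hL _ _] hd; apply: sumr_ge0 => i _; apply: sumr_ge0 => j _; exact: mulr_ge0.
Qed.

Definition costset P Q d := [set c | exists L, coupling P Q L /\
                 c = \sum_(i : S) \sum_(j : S) L i j * d i j]%classic.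

Lemma W1_le P Q d L : coupling P Q L -> (forall i j, 0 <= d i j) ->
  W1 P Q d <= \sum_i \sum_j L i j * d i j.
Proof.
move=> hL hd; rewrite /W1; apply: ge_inf; last by exists L.
exists 0 => c [L' [hL' ->]]; exact: cost_ge0 hL' hd.
Qed.

Lemma W1_mono P Q d d' : is_distr P -> is_distr Q -> (forall i j, 0 <= d i j) ->
  (forall i j, d i j <= d' i j) -> W1 P Q d <= W1 P Q d'.
Proof.
move=> hP hQ hd hdd; apply: lb_le_inf.
  by exists (\sum_i \sum_j DC P Q i j * d' i j); exists (DC P Q); split => //; exact: coupling_DC.
move=> c [L [hL ->]]; apply: (le_trans (W1_le hL hd)).
apply: ler_sum => i _; apply: ler_sum => j _; apply: ler_wpM2l => //.
by case: hL => h _ _; exact: h.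
Qed.

Lemma W1_ge0 P Q d : is_distr P -> is_distr Q -> (forall i j, 0 <= d i j) ->
  0 <= W1 P Q d.
Proof.
move=> hP hQ hd; apply: lb_le_inf.
  by exists (\sum_i \sum_j DC P Q i j * d i j); exists (DC P Q); split => //; exact: coupling_DC.
move=> c [L [hL ->]]; exact: cost_ge0 hL hd.
Qed.

Lemma W1_leB P Q d B : is_distr P -> is_distr Q -> (forall i j, 0 <= d i j) ->
  (forall i j, d i j <= B) -> W1 P Q d <= B.
Proof.
move=> hP hQ hd hB; have hL := coupling_DC hP hQ.
apply: (le_trans (W1_le hL hd)).
apply: le_trans (_ : \sum_i \sum_j DC P Q i j * B <= _).
  apply: ler_sum => i _; apply: ler_sum => j _; apply: ler_wpM2l => //.
  by case: hL => h _ _; exact: h.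
under eq_bigr => i _ do rewrite -mulr_suml.
case: hL => _ hr _; under eq_bigr => i _ do rewrite hr.
by rewrite -mulr_suml; case: hP => _ ->; rewrite mul1r.
Qed.

Lemma W1_diag P Q d B M : is_distr P -> is_distr Q -> (forall i j, 0 <= d i j) ->
  (forall i j, d i j <= B) -> (forall i, d i i <= M) -> 0 <= M ->
  W1 P Q d <= M + B * TV P Q.
Proof.
move=> hP hQ hd hB hM M0; have hL := coupling_DC hP hQ.
have [hP0 hP1] := hP; have [hQ0 hQ1] := hQ.
apply: (le_trans (W1_le hL hd)).
apply: le_trans (_ : \sum_i \sum_j ((i == j)%:R * mm P Q i * M +
   (P i - mm P Q i) * (Q j - mm P Q j) / tau P Q * B) <= _).
  apply: ler_sum => i _; apply: ler_sum => j _; rewrite /DC mulrDl.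
  apply: lerD.
    case: eqP => [<-|_]; last by rewrite !mul0r.
    by rewrite mul1r; apply: ler_wpM2l; [apply: mm_ge0 | apply: hM].
  apply: ler_wpM2l => //; apply: divr_ge0; last exact: tau_ge0.
  by apply: mulr_ge0; rewrite subr_ge0 ?mm_leP ?mm_leQ.
rewrite -tau_TV //.
under eq_bigr => i _ do rewrite big_split /=.
rewrite big_split /= lerD //.
  under eq_bigr => i _ do rewrite -mulr_suml sum_delta.
  rewrite -mulr_suml mulrC; apply: ler_piMr => //.
  by rewrite -hP1; apply: ler_sum => i _; apply: mm_leP.
under eq_bigr => i _ do under eq_bigr => j _ do rewrite -mulrA.
rewrite sum2_mul tau_Q // mulrA -/(tau P Q).
have [t0|tn0] := eqVneq (tau P Q) 0; first by rewrite t0 !mul0r mulr0.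
by rewrite mulfK // mulrC.
Qed.
End Coup.

Section MDP.
Variables (R : realType) (S A : finType).
Variables (Pr Pr' : S -> A -> S -> R) (Rw Rw' : S -> A -> R) (gamma : R).
Hypotheses (hg0 : 0 < gamma) (hg1 : gamma < 1)
  (hP : forall s a, is_distr (Pr s a)) (hP' : forall s a, is_distr (Pr' s a)).

Let d n := dn Pr Pr' Rw Rw' gamma n.
Let RM := Rmax Rw Rw'.
Let B := RM / (1 - gamma).
Let D := \big[Num.max/0]_(i : S) dTV Pr Pr' Rw Rw' gamma i.
Let M := D / (1 - gamma).

Lemma g1 : 0 < 1 - gamma. Proof. by rewrite subr_gt0. Qed.

Lemma RM_ge0 : 0 <= RM.
Proof. exact: bigmax_ge_id. Qed.

Lemma RM_le i j a : `|Rw i a - Rw' j a| <= RM.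
Proof.
rewrite /RM /Rmax.
apply: le_trans (le_bigmax _ _ i).
apply: le_trans (le_bigmax _ _ j).
exact: (le_bigmax _ (fun a => `|Rw i a - Rw' j a|) a).
Qed.

Lemma B_ge0 : 0 <= B.
Proof. apply: divr_ge0; [exact: RM_ge0 | exact: ltW g1]. Qed.

Lemma B_fix : RM + gamma * B = B.
Proof.
rewrite /B; have h := g1; field; by rewrite lt0r_neq0.
Qed.

Lemma dn_bounds n s t : 0 <= d n s t <= B.
Proof.
elim: n s t => [|n IH] s t /=; first by rewrite lexx B_ge0.
apply/andP; split; first exact: bigmax_ge_id.
apply: bigmax_le; first exact: B_ge0.
move=> a _; rewrite -B_fix; apply: lerD; first exact: RM_le.
apply: ler_wpM2l; first exact: ltW.
apply: W1_leB => // i j; by case/andP: (IH i j).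
Qed.

Lemma dn_ge0 n s t : 0 <= d n s t. Proof. by case/andP: (dn_bounds n s t). Qed.
Lemma dn_leB n s t : d n s t <= B. Proof. by case/andP: (dn_bounds n s t). Qed.

Lemma dn_mono n s t : d n s t <= d n.+1 s t.
Proof.
elim: n s t => [|n IH] s t; first exact: (dn_ge0 1).
rewrite /d /=; apply: bigmax_le; first exact: bigmax_ge_id.
move=> a _; apply: le_trans (le_bigmax _ _ a); apply: lerD => //.
apply: ler_wpM2l; first exact: ltW.
apply: W1_mono; [exact: hP | exact: hP' | exact: dn_ge0 | exact: IH].
Qed.

Lemma D_ge0 : 0 <= D. Proof. exact: bigmax_ge_id. Qed.
Lemma M_ge0 : 0 <= M. Proof. apply: divr_ge0; [exact: D_ge0 | exact: ltW g1]. Qed.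

Lemma dn_diag n i : d n i i <= M.
Proof.
elim: n i => [|n IH] i; first exact: M_ge0.
rewrite /d /=; apply: bigmax_le; first exact: M_ge0.
move=> a _.
have hW := W1_diag (hP i a) (hP' i a) (dn_ge0 n) (dn_leB n) IH M_ge0.
apply: le_trans (_ : `|Rw i a - Rw' i a| + gamma * (M + B * TV (Pr i a) (Pr' i a)) <= _).
  apply: lerD => //; apply: ler_wpM2l => //; exact: ltW.
have hT : `|Rw i a - Rw' i a| + gamma * RM / (1 - gamma) * TV (Pr i a) (Pr' i a) <= D.
  apply: le_trans (le_bigmax _ _ i); rewrite /dTV.
  exact: (le_bigmax _ (fun a => `|Rw i a - Rw' i a| + gamma * RM / (1 - gamma) * TV (Pr i a) (Pr' i a)) a).
have e : M = D + gamma * M by rewrite /M; have h := g1; field; rewrite lt0r_neq0.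
rewrite [X in _ <= X]e.
have e2 : `|Rw i a - Rw' i a| + gamma * (M + B * TV (Pr i a) (Pr' i a)) =
   (`|Rw i a - Rw' i a| + gamma * RM / (1 - gamma) * TV (Pr i a) (Pr' i a)) + gamma * M.
  by rewrite /B; have h := g1; field; rewrite lt0r_neq0.
by rewrite e2 lerD.
Qed.

Lemma dbar_diag i : dbar Pr Pr' Rw Rw' gamma i i <= M.
Proof.
rewrite /dbar; apply: limr_le.
  apply: nondecreasing_is_cvgn.
    by apply/nondecreasing_seqP => n; exact: dn_mono.
  by exists B => _ [n _ <-]; exact: dn_leB.
by apply: nearW => n; exact: dn_diag.
Qed.

End MDP.

Theorem lemma5 (R : realType) (S A : finType)
  (Pr Pr' : S -> A -> S -> R) (Rw Rw' : S -> A -> R) (gamma : R)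
  (hg0 : 0 < gamma) (hg1 : gamma < 1)
  (hP : forall s a, is_distr (Pr s a))
  (hP' : forall s a, is_distr (Pr' s a)) :
  \big[Num.max/0]_(i : S) dbar Pr Pr' Rw Rw' gamma i i
  <= (1 - gamma)^-1 * \big[Num.max/0]_(i : S) dTV Pr Pr' Rw Rw' gamma i.
Proof.
apply: bigmax_le.
  by apply: mulr_ge0; [rewrite invr_ge0 subr_ge0 ltW | exact: bigmax_ge_id].
move=> i _; rewrite mulrC; exact: dbar_diag.
Qed.
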